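(* Let $v\in\mathbb{Z}^d$ be primitive and $p$ a prime. Let $h\in H_v(\mathbb{Q}_p)\cap\mathrm{SO}_d(\mathbb{Z}_p)\mathrm{SO}_d(\mathbb{Z}[1/p])$, and write $h=c_1\gamma_1$ with $c_1\in\mathrm{SO}_d(\mathbb{Z}_p)$, $\gamma_1\in\mathrm{SO}_d(\mathbb{Z}[1/p])$, and $g_v^{-1}hg_v=c_2\gamma_2^{-1}$ with $c_2\in\mathrm{ASL}_{d-1}(\mathbb{Z}_p)$, $\gamma_2\in\mathrm{ASL}_{d-1}(\mathbb{Z}[1/p])$. Then $\gamma_1g_v\gamma_2\in\mathrm{SL}_d(\mathbb{Z})$.
   Context: For primitive $v\in\mathbb{Z}^d$: $\Lambda_v=v^\perp\cap\mathbb{Z}^d$; $H_v\le\mathrm{SO}_d$ is the stabilizer of $v$ (a $\mathbb{Q}$-algebraic group); $g_v\in\mathrm{SL}_d(\mathbb{Z})$ is a matrix whose first $d-1$ columns form a positively oriented $\mathbb{Z}$-basis of $\Lambda_v$. $\mathrm{ASL}_{d-1}=\{\begin{pmatrix}g&*\\0&1\end{pmatrix}:g\in\mathrm{SL}_{d-1}\}\le\mathrm{SL}_d$; one has $g_v^{-1}H_vg_v\le\mathrm{ASL}_{d-1}$ and $\mathrm{ASL}_{d-1}(\mathbb{Q}_p)=\mathrm{ASL}_{d-1}(\mathbb{Z}_p)\mathrm{ASL}_{d-1}(\mathbb{Z}[1/p])$, so such decompositions exist. *)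

(* Defs.v *)
From HB Require Import structures.
From mathcomp Require Import all_boot all_order all_algebra.
Set Implicit Arguments. Unset Strict Implicit. Unset Printing Implicit Defensive.
Import Order.TTheory GRing.Theory Num.Theory.
Local Open Scope ring_scope.

Definition padic_val (p : nat) (q : rat) : int :=
  (logn p `|numq q|%N)%:Z - (logn p `|denq q|%N)%:Z.

Definition padic_abs (p : nat) (q : rat) : rat :=
  if q == 0 then 0 else (p%:R : rat) ^ (- padic_val p q).

(* (K, iota, nrm) is a model of Q_p: a field with a non-archimedean absolute
   value, containing Q (via iota) as a dense subfield on which the absolute
   value is the p-adic one, and complete.  These properties characterize Q_p
   up to (isometric) isomorphism. *)
Record is_Qp (p : nat) (K : fieldType) (iota : {rmorphism rat -> K})
    (nrm : K -> rat) : Prop := IsQp {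
  Qp_nrm_ge0 : forall x, 0 <= nrm x;
  Qp_nrm_eq0 : forall x, nrm x = 0 <-> x = 0;
  Qp_nrmM : forall x y, nrm (x * y) = nrm x * nrm y;
  Qp_nrm_ultra : forall x y, nrm (x + y) <= Num.max (nrm x) (nrm y);
  Qp_nrm_rat : forall q, nrm (iota q) = padic_abs p q;
  Qp_dense : forall x e, 0 < e -> exists q, nrm (x - iota q) < e;
  Qp_complete : forall u : nat -> K,
    (forall e, 0 < e -> exists N, forall m n, (N <= m)%N -> (N <= n)%N ->
        nrm (u m - u n) < e) ->
    exists l, forall e, 0 < e -> exists N, forall n, (N <= n)%N -> nrm (u n - l) < e
}.

Definition Zp_elt (K : fieldType) (nrm : K -> rat) (x : K) : Prop := nrm x <= 1.

Definition Zinvp (p : nat) (q : rat) : Prop :=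
  exists (k : nat) (z : int), q = z%:~R / (p%:R ^+ k).

Definition primitive (d : nat) (v : 'cV[int]_d) : Prop :=
  \big[gcdz/0]_(i < d) v i 0 = 1.

Definition in_SO (R : comUnitRingType) (d : nat) (A : 'M[R]_d) : Prop :=
  A^T *m A = 1%:M /\ \det A = 1.

(* ASL_{d-1} inside SL_d: det 1 and last row (0,...,0,1) *)
Definition in_ASL (R : comUnitRingType) (d : nat) (A : 'M[R]_d) : Prop :=
  \det A = 1 /\
  forall i j : 'I_d, nat_of_ord i = d.-1 -> A i j = (nat_of_ord j == d.-1)%:R.

(* g_v: in SL_d(Z), first d-1 columns are a positively oriented Z-basis of
   Lambda_v = v^perp \cap Z^d.  Positive orientation: det(b_1,...,b_{d-1}, v) > 0. *)
Definition is_gv (d : nat) (v : 'cV[int]_d) (g : 'M[int]_d) : Prop :=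
  [/\ \det g = 1,
      (forall j : 'I_d, (j < d.-1)%N -> v^T *m col j g = 0),
      (forall w : 'cV[int]_d, v^T *m w = 0 ->
         exists a : 'I_d -> int,
           w = \sum_(j < d | (j < d.-1)%N) a j *: col j g) &
      0 < \det (\matrix_(i < d, j < d) if (j < d.-1)%N then g i j else v i 0)].

(* Main.v *)
Require Import Defs.
From mathcomp Require Import all_boot all_order all_algebra.
From mathcomp Require Import ring.
Import Order.TTheory GRing.Theory Num.Theory.
Local Open Scope ring_scope.

Lemma den1 (p : nat) (q : rat) : prime p -> padic_abs p q <= 1 -> Zinvp p q -> denq q = 1.
Proof.
move=> pp hab [k [z hq]].
have [->|q0] := eqVneq q 0; first by [].
have hp0 : (p%:R : rat) ^+ k != 0 by rewrite expf_neq0 // pnatr_eq0 -lt0n prime_gt0.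
have e : numq q * (p ^ k)%N%:Z = z * denq q.
  apply: (@intr_inj rat); rewrite !rmorphM /= numqE hq. have -> : ((p ^ k)%N%:~R : rat) = (p%:R)^+k by rewrite -natrX.
  by field.
have ha : (`|numq q| * p ^ k = `|z| * `|denq q|)%N.
  by move/(congr1 absz): e; rewrite !abszM.
have cop := coprime_num_den q.
have hd : (`|denq q| %| p ^ k)%N.
  have cop2 : coprime `|denq q| `|numq q| by rewrite coprime_sym.
  by rewrite -(Gauss_dvdr (p ^ k) cop2) ha dvdn_mull.
case/(dvdn_pfactor _ _ pp): hd => m _ hm.
have dE : denq q = (`|denq q|)%N%:Z by rewrite abszE gtr0_norm // denq_gt0.
case: m hm => [|m] hm; first by rewrite dE hm.
exfalso.
have pd : (p %| `|denq q|)%N by rewrite hm expnS dvdn_mulr.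
have cp : coprime p `|numq q| by rewrite coprime_sym (coprime_dvdr pd cop).
move: hab; rewrite /padic_abs (negPf q0) /padic_val hm pfactorK // logn_coprime //.
rewrite sub0r opprK leNgt => /negP; apply.
by rewrite exprn_egt1 // ltr1n prime_gt1.
Qed.

Lemma Zinvp_int p (z : int) : Zinvp p z%:~R.
Proof. by exists 0%N, z; rewrite expr0 divr1. Qed.

Lemma Zinvp_add p x y : prime p -> Zinvp p x -> Zinvp p y -> Zinvp p (x + y).
Proof.
move=> pp [k1 [z1 ->]] [k2 [z2 ->]].
have hp0 : forall k, (p%:R : rat) ^+ k != 0.
  by move=> k; rewrite expf_neq0 // pnatr_eq0 -lt0n prime_gt0.
exists (k1 + k2)%N, (z1 * (p ^ k2)%N%:Z + z2 * (p ^ k1)%N%:Z).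
rewrite rmorphD !rmorphM /=.
have E : forall k, ((p ^ k)%N%:~R : rat) = (p%:R)^+k by move=> k; rewrite -natrX.
rewrite !E exprD. by field; rewrite !hp0.
Qed.

Lemma Zinvp_mul p x y : prime p -> Zinvp p x -> Zinvp p y -> Zinvp p (x * y).
Proof.
move=> pp [k1 [z1 ->]] [k2 [z2 ->]].
have hp0 : forall k, (p%:R : rat) ^+ k != 0.
  by move=> k; rewrite expf_neq0 // pnatr_eq0 -lt0n prime_gt0.
exists (k1 + k2)%N, (z1 * z2).
rewrite rmorphM /= exprD. by field; rewrite !hp0.
Qed.

Lemma Zinvp_mx p n m l (A : 'M[rat]_(n, m)) (B : 'M[rat]_(m, l)) : prime p ->
  (forall i j, Zinvp p (A i j)) -> (forall i j, Zinvp p (B i j)) ->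
  forall i j, Zinvp p ((A *m B) i j).
Proof.
move=> pp hA hB i j; rewrite mxE.
apply: (big_ind (Zinvp p)).
- exact: (Zinvp_int p 0).
- by move=> x y; apply: Zinvp_add.
- by move=> k _; apply: Zinvp_mul.
Qed.

Lemma nrm_mx p (K : fieldType) (iota : {rmorphism rat -> K}) (nrm : K -> rat)
  n m l (A : 'M[K]_(n, m)) (B : 'M[K]_(m, l)) : is_Qp p iota nrm ->
  (forall i j, nrm (A i j) <= 1) -> (forall i j, nrm (B i j) <= 1) ->
  forall i j, nrm ((A *m B) i j) <= 1.
Proof.
move=> H hA hB i j; rewrite mxE.
apply: (big_ind (fun x => nrm x <= 1)).
- by have [_ ->] := Qp_nrm_eq0 H 0.
- move=> x y hx hy; apply: le_trans (Qp_nrm_ultra H x y) _.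
  by rewrite ge_max hx hy.
- move=> k _; rewrite (Qp_nrmM H); apply: mulr_ile1 => //; exact: (Qp_nrm_ge0 H).
Qed.

Lemma padic_abs_int p (z : int) : prime p -> padic_abs p z%:~R <= 1.
Proof.
move=> pp; rewrite /padic_abs; case: ifP => // _.
rewrite /padic_val numq_int denq_int logn1 subr0 -exprnN invf_le1.
  by rewrite exprn_ege1 // ler1n prime_gt0.
by rewrite exprn_gt0 // ltr0n prime_gt0.
Qed.
Theorem lemma3p2 (d : nat) (v : 'cV[int]_d) (p : nat)
    (K : fieldType) (iota : {rmorphism rat -> K}) (nrm : K -> rat)
    (g_v : 'M[int]_d) (h c1 c2 : 'M[K]_d) (gamma1 gamma2 : 'M[rat]_d) :
  primitive v -> prime p -> is_Qp p iota nrm -> is_gv v g_v ->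
  (* h in H_v(Q_p) *)
  in_SO h -> h *m map_mx (fun z : int => iota z%:~R) v = map_mx (fun z : int => iota z%:~R) v ->
  (* h = c1 gamma1, c1 in SO_d(Z_p), gamma1 in SO_d(Z[1/p]) *)
  in_SO c1 -> (forall i j, Zp_elt nrm (c1 i j)) ->
  in_SO gamma1 -> (forall i j, Zinvp p (gamma1 i j)) ->
  h = c1 *m map_mx iota gamma1 ->
  (* g_v^{-1} h g_v = c2 gamma2^{-1}, c2 in ASL_{d-1}(Z_p), gamma2 in ASL_{d-1}(Z[1/p]) *)
  in_ASL c2 -> (forall i j, Zp_elt nrm (c2 i j)) ->
  in_ASL gamma2 -> (forall i j, Zinvp p (gamma2 i j)) ->
  invmx (map_mx (fun z : int => iota z%:~R) g_v) *m h *m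
      map_mx (fun z : int => iota z%:~R) g_v
    = c2 *m invmx (map_mx iota gamma2) ->
  (* conclusion: gamma1 g_v gamma2 in SL_d(Z) *)
  exists M : 'M[int]_d, \det M = 1 /\
    map_mx (fun z : int => z%:~R) M = gamma1 *m map_mx (fun z : int => z%:~R) g_v *m gamma2.
Proof.
move=> _ pp HQ [detg _ _ _] _ _ [c1T _] hc1 [_ det1] hg1 Hh [_ _] hc2 [det2 _] hg2 E.
set G := map_mx (fun z : int => iota z%:~R) g_v in E *.
set Mq := gamma1 *m map_mx (fun z : int => z%:~R) g_v *m gamma2.
have GE : G = map_mx iota (map_mx intr g_v) by apply/matrixP => i j; rewrite !mxE.
have Gu : G \in unitmx by rewrite unitmxE GE det_map_mx det_map_mx detg !rmorph1 unitr1.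
have g2u : map_mx iota gamma2 \in unitmx by rewrite unitmxE det_map_mx det2 rmorph1 unitr1.
have E2 : h *m G *m map_mx iota gamma2 = G *m c2.
  have := congr1 (mulmx G) E.
  rewrite !mulmxA mulmxV // mul1mx => ->.
  by rewrite -mulmxA mulVmx // mulmx1.
have g1E : map_mx iota gamma1 = c1^T *m h by rewrite Hh mulmxA c1T mul1mx.
have ME : map_mx iota Mq = c1^T *m (G *m c2).
  by rewrite /Mq !map_mxM -GE g1E -E2 !mulmxA.
have den : forall i j, denq (Mq i j) = 1.
  move=> i j; apply: (@den1 p _ pp).
  - rewrite -(Qp_nrm_rat HQ (Mq i j)).
    have := congr1 (fun A : 'M[K]_d => A i j) ME; rewrite mxE => ->.
    apply: (@nrm_mx p K iota nrm _ _ _ _ _ HQ) => [i' j'|]; first by rewrite mxE; exact: hc1.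
    apply: (@nrm_mx p K iota nrm _ _ _ _ _ HQ) => [i' j'|i' j']; last exact: hc2.
    by rewrite mxE (Qp_nrm_rat HQ) padic_abs_int.
  - apply: Zinvp_mx => // i' j'.
    apply: Zinvp_mx => // i'' j''; rewrite mxE; exact: Zinvp_int.
exists (\matrix_(i, j) numq (Mq i j)).
have MM : map_mx (fun z : int => z%:~R) (\matrix_(i, j) numq (Mq i j)) = Mq.
  by apply/matrixP => i j; rewrite [LHS]mxE [in LHS]mxE numqE den mulr1.
split=> //.
apply: (@intr_inj rat).
rewrite -(det_map_mx (intr : {rmorphism int -> rat})) MM /Mq !det_mulmx det1 det2 det_map_mx detg.
by rewrite !rmorph1 !mulr1.
Qed.
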